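(* Let $(S,\mathcal C)$ be a connectoid. For every end $\omega$ of $(S,\mathcal C)$ there is a unique direction $d_\omega$ of $(S,\mathcal C)$ such that $d_\omega(A)=K(A,\omega)$ for every finite set $A\subseteq S$. The map $\omega\mapsto d_\omega$ is a bijection between $\Omega(S,\mathcal C)$ and the set of directions of $(S,\mathcal C)$.
   Context: A connectoid is given by a set $S$ and a set $\mathcal F$ of finite subsets of $S$ such that (i) $F\cup F'\in\mathcal F$ whenever $F,F'\in\mathcal F$ and $F\cap F'\neq\emptyset$, and (ii) $\emptyset\in\mathcal F$ and $\{s\}\in\mathcal F$ for every $s\in S$. A set $C\subseteq S$ is connected if for all $x,y\in C$ there is $F\in\mathcal F$ with $F\subseteq C$ and $x,y\in F$; $\mathcal C$ is the set of connected sets and $(S,\mathcal C)$ is the connectoid (the finite connected sets are exactly the elements of $\mathcal F$). For $S'\subseteq S$, a component of $S'$ is a maximal connected subset of $S'$, and $\mathcal K(S')$ is the set of components of $S'$ (it partitions $S'$). ''Almost all'' means all but finitely many. A necklace is a connected set $N$ for which there is a family $(H_n)_{n\in\mathbb N}$ of finite connected sets with $N=\bigcup_n H_n$ and $H_i\cap H_j\neq\emptyset$ iff $|i-j|\le 1$. For a necklace $N$ and finite $X\subseteq S$, exactly one element of $\mathcal K(N\setminus X)$ contains almost all elements of $N$; it is called the $X$-tail of $N$. Two necklaces are equivalent if for every finite $X\subseteq S$ their $X$-tails are contained in the same element of $\mathcal K(S\setminus X)$. An end is an equivalence class of necklaces; $\Omega(S,\mathcal C)$ is the set of ends. For an end $\omega$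 and finite $X\subseteq S$, $K(X,\omega)$ denotes the element of $\mathcal K(S\setminus X)$ containing the $X$-tails of all necklaces in $\omega$. A direction of $(S,\mathcal C)$ is a map $d$ assigning to every finite $A\subseteq S$ an element $d(A)\in\mathcal K(S\setminus A)$ such that $d(B)\subseteq d(A)$ whenever $A\subseteq B$ are finite subsets of $S$. *)

(* Defs.v *)
(* sets are predicates T -> Prop; the ground set S is the type T. *)
From Stdlib Require Import List Arith.
Set Implicit Arguments.

Section Connectoids.
Variable T : Type.

Definition subset (X Y : T -> Prop) : Prop := forall x, X x -> Y x.
Definition setminus (X A : T -> Prop) : T -> Prop := fun x => X x /\ ~ A x.
Definition setU (X Y : T -> Prop) : T -> Prop := fun x => X x \/ Y x.
Definition setT : T -> Prop := fun _ => True.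
Definition finite (X : T -> Prop) : Prop :=
  exists l : list T, forall x, X x -> In x l.

(* (S, F) is a connectoid; F is a family of finite subsets of S.
   F is required to be closed under extensional equality of predicates
   (a representation convention: sets are predicates). *)
Definition is_connectoid (F : (T -> Prop) -> Prop) : Prop :=
  (forall X, F X -> finite X) /\
  (forall X Y, F X -> (forall x, X x <-> Y x) -> F Y) /\
  (forall X Y, F X -> F Y -> (exists x, X x /\ Y x) -> F (setU X Y)) /\
  F (fun _ => False) /\
  (forall s, F (fun x => x = s)).

Variable F : (T -> Prop) -> Prop.

Definition connected (C : T -> Prop) : Prop :=
  forall x y, C x -> C y -> exists X, F X /\ subset X C /\ X x /\ X y.

(* C is a component of X: a (nonempty) maximal connected subset of X.
   Components are nonempty, as K(X) is a partition of X. *)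
Definition component (X C : T -> Prop) : Prop :=
  (exists x, C x) /\ subset C X /\ connected C /\
  (forall D, connected D -> subset C D -> subset D X -> subset D C).

Definition necklace (N : T -> Prop) : Prop :=
  connected N /\
  exists H : nat -> (T -> Prop),
    (forall n, finite (H n) /\ connected (H n)) /\
    (forall x, N x <-> exists n, H n x) /\
    (forall i j, (exists x, H i x /\ H j x) <-> (i <= j + 1 /\ j <= i + 1)).

Definition tail (X N D : T -> Prop) : Prop :=
  component (setminus N X) D /\ finite (setminus N D).

Definition neck_equiv (N M : T -> Prop) : Prop :=
  forall X, finite X ->
    exists C, component (setminus setT X) C /\
      (exists D, tail X N D /\ subset D C) /\
      (exists D, tail X M D /\ subset D C).

Definition is_end (w : (T -> Prop) -> Prop) : Prop :=
  exists N, necklace N /\ forall M, w M <-> (necklace M /\ neck_equiv N M).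

Definition isK (A : T -> Prop) (w : (T -> Prop) -> Prop) (C : T -> Prop) : Prop :=
  component (setminus setT A) C /\
  forall N, w N -> exists D, tail A N D /\ subset D C.

(* a direction (only its values on finite sets matter) *)
Definition is_direction (d : (T -> Prop) -> (T -> Prop)) : Prop :=
  (forall A, finite A -> component (setminus setT A) (d A)) /\
  (forall A B, finite A -> finite B -> subset A B -> subset (d B) (d A)).

End Connectoids.

(* Main.v *)
Require Import Defs.
From Stdlib Require Import List Arith Lia Classical ClassicalEpsilon FunctionalExtensionality PropExtensionality.

Section Basics.
Variable T : Type.
Variable F : (T -> Prop) -> Prop.
Hypothesis hF : is_connectoid F.

Lemma F_fin X : F X -> finite X.
Proof. destruct hF as [h _]. apply h. Qed.
Lemma F_un X Y : F X -> F Y -> (exists x, X x /\ Y x) -> F (setU X Y).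
Proof. destruct hF as [_ [_ [h _]]]. apply h. Qed.
Lemma F_empty : F (fun _ => False).
Proof. destruct hF as [_ [_ [_ [h _]]]]. exact h. Qed.

Lemma set_ext (A B : T -> Prop) : (forall x, A x <-> B x) -> A = B.
Proof. intros h. apply functional_extensionality. intros x. apply propositional_extensionality. auto. Qed.

Lemma conn_F X : F X -> connected F X.
Proof. intros HX x y hx hy. exists X. repeat split; auto. intros z hz; exact hz. Qed.

Lemma conn_union C1 C2 : connected F C1 -> connected F C2 -> (exists z, C1 z /\ C2 z) -> connected F (setU C1 C2).
Proof.
  intros h1 h2 [z [z1 z2]] x y hx hy.
  assert (gen: forall a b, C1 a -> C2 b -> exists X, F X /\ subset X (setU C1 C2) /\ X a /\ X b).
  { intros a b ha hb.
    destruct (h1 a z ha z1) as [X1 [f1 [s1 [a1 b1]]]].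
    destruct (h2 z b z2 hb) as [X2 [f2 [s2 [a2 b2]]]].
    exists (setU X1 X2). split. apply F_un; auto. exists z; auto.
    split. intros w [hw|hw]; [left; apply s1 | right; apply s2]; auto.
    split; [left|right]; auto. }
  destruct hx as [hx|hx]; destruct hy as [hy|hy].
  - destruct (h1 x y hx hy) as [X [f [s [a b]]]]. exists X; repeat split; auto. intros w hw; left; auto.
  - apply gen; auto.
  - destruct (gen y x hy hx) as [X [f [s [a b]]]]. exists X; auto.
  - destruct (h2 x y hx hy) as [X [f [s [a b]]]]. exists X; repeat split; auto. intros w hw; right; auto.
Qed.

Lemma comp_absorb Y K C : component F Y K -> connected F C -> subset C Y -> (exists z, C z /\ K z) -> subset C K.
Proof.
  intros [_ [hKY [hK hmax]]] hC hCY [z [zc zk]].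
  assert (hU: subset (setU K C) K).
  { apply hmax. apply conn_union; auto. exists z; auto.
    intros w hw; left; auto.
    intros w [hw|hw]; auto. }
  intros w hw. apply hU. right; auto.
Qed.

Lemma comp_eq Y K1 K2 : component F Y K1 -> component F Y K2 -> (exists z, K1 z /\ K2 z) -> K1 = K2.
Proof.
  intros h1 h2 [z [a b]]. apply set_ext; intros x; split; intros hx.
  - apply (comp_absorb Y K2 K1); auto. destruct h1 as [_ [_ [c _]]]; auto.
    destruct h1 as [_ [s _]]; auto. exists z; auto.
  - apply (comp_absorb Y K1 K2); auto. destruct h2 as [_ [_ [c _]]]; auto.
    destruct h2 as [_ [s _]]; auto. exists z; auto.
Qed.

Lemma comp_exists Y C : connected F C -> (exists z, C z) -> subset C Y -> exists K, component F Y K /\ subset C K.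
Proof.
  intros hC [z hz] hCY.
  set (K := fun x => exists D, connected F D /\ subset D Y /\ subset C D /\ D x).
  exists K.
  assert (hCK : subset C K). { intros x hx. exists C. repeat split; auto. intros w hw; exact hw. }
  split; [|exact hCK].
  split. exists z. apply hCK; auto.
  split. intros x [D [_ [hD [_ hx]]]]. apply hD; auto.
  split.
  - intros x y [D1 [c1 [s1 [e1 x1]]]] [D2 [c2 [s2 [e2 y2]]]].
    assert (hU : connected F (setU D1 D2)). { apply conn_union; auto. exists z; split; [apply e1|apply e2]; auto. }
    destruct (hU x y (or_introl x1) (or_intror y2)) as [X [f [s [a b]]]].
    exists X. repeat split; auto. intros w hw. exists (setU D1 D2). repeat split; auto.
    intros v [hv|hv]; auto. intros v hv; left; apply e1; auto.
  - intros D hD hKD hDY x hx. exists D. repeat split; auto. intros w hw. apply hKD, hCK; auto.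
Qed.

Lemma conn_list C : connected F C -> forall l : list T, exists H, F H /\ subset H C /\ (forall x, In x l -> C x -> H x).
Proof.
  intros hC l. induction l as [|a l IH].
  - exists (fun _ => False). split. apply F_empty. split. intros x []. intros x [].
  - destruct IH as [H [fH [sH iH]]].
    destruct (classic (C a)) as [ha|ha].
    + destruct (classic (exists b, H b)) as [[b hb]|hnb].
      * destruct (hC a b ha (sH b hb)) as [X [fX [sX [xa xb]]]].
        exists (setU H X). split. apply F_un; auto. exists b; auto.
        split. intros w [hw|hw]; auto.
        intros x [<-|hx] hCx. right; auto. left; auto.
      * destruct (hC a a ha ha) as [X [fX [sX [xa _]]]].
        exists X. split; auto. split; auto. intros x [<-|hx] hCx. auto. exfalso; apply hnb; exists x; auto.
    + exists H. split; auto. split; auto. intros x [<-|hx] hCx. contradiction. auto.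
Qed.

Lemma finite_union (X Y : T -> Prop) : finite X -> finite Y -> finite (setU X Y).
Proof. intros [l1 h1] [l2 h2]. exists (l1 ++ l2). intros x [hx|hx]; apply in_or_app; auto. Qed.
Lemma finite_sub (X Y : T -> Prop) : subset X Y -> finite Y -> finite X.
Proof. intros s [l h]. exists l. intros x hx; apply h, s, hx. Qed.

Lemma list_bound (P : nat -> T -> Prop) : (forall n m x, n <= m -> P n x -> P m x) ->
  forall l, (forall x, In x l -> exists n, P n x) -> exists N, forall x, In x l -> P N x.
Proof.
  intros hm l. induction l as [|a l IH]; intros h.
  - exists 0. intros x [].
  - destruct IH as [N hN]. intros x hx; apply h; right; auto.
    destruct (h a (or_introl eq_refl)) as [n hn].
    exists (Nat.max N n). intros x [<-|hx].
    + apply hm with n; auto; lia.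
    + apply hm with N; auto; lia.
Qed.

Lemma chain_conn (H : nat -> T -> Prop) : (forall n, connected F (H n)) -> (forall n, exists x, H n x /\ H (S n) x) ->
  forall k, connected F (fun x => exists n, k <= n /\ H n x).
Proof.
  intros hc hi k.
  assert (gen : forall m i x y, k <= i -> H i x -> H (i + m) y -> exists X, F X /\ subset X (fun x => exists n, k <= n /\ H n x) /\ X x /\ X y).
  { induction m as [|m IH]; intros i x y hk hx hy.
    - rewrite Nat.add_0_r in hy. destruct (hc i x y hx hy) as [X [f [s [a b]]]].
      exists X. repeat split; auto. intros w hw. exists i. split; auto.
    - destruct (hi (i+m)) as [z [z1 z2]].
      destruct (IH i x z hk hx z1) as [X1 [f1 [s1 [a1 b1]]]].
      rewrite Nat.add_succ_r in hy.
      destruct (hc (S (i+m)) z y z2 hy) as [X2 [f2 [s2 [a2 b2]]]].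
      exists (setU X1 X2). split. apply F_un; auto. exists z; auto.
      split. intros w [hw|hw]. apply s1; auto. exists (S (i+m)). split. lia. apply s2; auto.
      split. left; auto. right; auto. }
  intros x y [i [hi1 hx]] [j [hj1 hy]].
  destruct (le_lt_dec i j) as [hij|hij].
  - replace j with (i + (j - i)) in hy by lia. apply (gen (j-i) i x y); auto.
  - replace i with (j + (i - j)) in hx by lia. destruct (gen (i-j) j y x hj1 hy hx) as [X [f [s [a b]]]].
    exists X; auto.
Qed.

Lemma finhit (H : nat -> T -> Prop) : (forall i j, (exists x, H i x /\ H j x) -> i <= j + 1) ->
  forall X, finite X -> exists n0, forall n x, n0 <= n -> H n x -> ~ X x.
Proof.
  intros hij X [l hl].
  assert (hmo : forall n m x, n <= m -> (forall k, n <= k -> ~ H k x) -> (forall k, m <= k -> ~ H k x)).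
  { intros n m x hnm h k hk. apply h. lia. }
  destruct (list_bound (fun n x => forall m, n <= m -> ~ H m x) hmo l) as [N hN].
  - intros x _. destruct (classic (exists i, H i x)) as [[i hi]|hn].
    + exists (S (S i)). intros m hm hmx. assert (m <= i + 1) by (apply hij; exists x; auto). lia.
    + exists 0. intros m _ hmx. apply hn; exists m; auto.
  - exists N. intros n x hn hx hX. apply (hN x (hl x hX) n hn hx).
Qed.

Lemma finite_bunion (H : nat -> T -> Prop) : (forall n, finite (H n)) ->
  forall m, finite (fun x => exists n, n < m /\ H n x).
Proof.
  intros hH m. induction m as [|m IH].
  - exists nil. intros x [n [h _]]. lia.
  - apply finite_sub with (Y := setU (fun x => exists n, n < m /\ H n x) (H m)).
    + intros x [n [hn hx]]. destruct (Nat.eq_dec n m) as [->|hne]. right; auto. left. exists n. split; auto. lia.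
    + apply finite_union; auto.
Qed.


Lemma neck_cof N D1 D2 : necklace F N -> finite (setminus N D1) -> finite (setminus N D2) -> exists x, D1 x /\ D2 x.
Proof.
  intros [_ [H [hH [hN hij]]]] f1 f2.
  destruct (finhit H (fun i j h => proj1 (proj1 (hij i j) h)) _ (finite_union _ _ f1 f2)) as [n0 hn0].
  destruct (proj2 (hij n0 n0) (conj (Nat.le_add_r _ _) (Nat.le_add_r _ _))) as [x [hx _]].
  assert (hNx : N x) by (apply hN; exists n0; auto).
  exists x. split; apply NNPP; intros hc; apply (hn0 n0 x (le_n _) hx); [left|right]; split; auto.
Qed.

Lemma tail_exists N X : necklace F N -> finite X -> exists D, Defs.tail F X N D.
Proof.
  intros [_ [H [hH [hN hij]]]] hX.
  destruct (finhit H (fun i j h => proj1 (proj1 (hij i j) h)) X hX) as [n0 hn0].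
  set (C := fun x => exists n, n0 <= n /\ H n x).
  assert (hC : connected F C).
  { apply chain_conn. intros n; apply hH. intros n. apply (hij n (S n)). lia. }
  assert (hCne : exists z, C z).
  { destruct (proj2 (hij n0 n0) (conj (Nat.le_add_r _ _) (Nat.le_add_r _ _))) as [x [hx _]].
    exists x. exists n0; auto. }
  assert (hCs : subset C (setminus N X)).
  { intros x [n [hn hx]]. split. apply hN; exists n; auto. apply (hn0 n x hn hx). }
  destruct (comp_exists _ _ hC hCne hCs) as [K [hK hCK]].
  exists K. split; auto.
  apply finite_sub with (Y := fun x => exists n, n < n0 /\ H n x).
  - intros x [hx hKx]. apply hN in hx as [n hn]. exists n. split; auto.
    destruct (le_lt_dec n0 n) as [h|h]; auto. exfalso. apply hKx, hCK. exists n; auto.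
  - apply finite_bunion. intros n; apply hH.
Qed.

Lemma tail_comp X N D : finite X -> Defs.tail F X N D -> exists C, component F (setminus (@setT T) X) C /\ subset D C.
Proof.
  intros hX [[hne [hs [hc _]]] _].
  apply comp_exists; auto. intros x hx. destruct (hs x hx) as [_ h]. split; auto. exact I.
Qed.

Lemma neck_refl N : necklace F N -> neck_equiv F N N.
Proof.
  intros hN X hX. destruct (tail_exists N X hN hX) as [D hD].
  destruct (tail_comp X N D hX hD) as [C [hC hDC]].
  exists C. split; auto. split; exists D; auto.
Qed.

Lemma end_self w : is_end F w -> exists N, necklace F N /\ w N.
Proof.
  intros [N [hN hw]]. exists N. split; auto. apply hw. split; auto. apply neck_refl; auto.
Qed.

Lemma K_exists w A : is_end F w -> finite A -> exists C, isK F A w C.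
Proof.
  intros [N0 [hN0 hw]] hA.
  destruct (tail_exists N0 A hN0 hA) as [D0 hD0].
  destruct (tail_comp A N0 D0 hA hD0) as [C [hC hD0C]].
  exists C. split; auto. intros M hM. apply hw in hM as [hM he].
  destruct (he A hA) as [C' [hC' [[D [hD hDC']] [D' [hD' hD'C']]]]].
  exists D'; split; auto.
  assert (e : C' = C).
  { apply (comp_eq _ _ _ hC' hC).
    destruct (neck_cof N0 D D0 hN0 (proj2 hD) (proj2 hD0)) as [z [z1 z2]].
    exists z; split; auto. }
  subst; auto.
Qed.

Lemma K_unique w A C1 C2 : is_end F w -> isK F A w C1 -> isK F A w C2 -> C1 = C2.
Proof.
  intros hw [h1 k1] [h2 k2]. destruct (end_self w hw) as [N [hN hwN]].
  destruct (k1 N hwN) as [D1 [t1 s1]]. destruct (k2 N hwN) as [D2 [t2 s2]].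
  apply (comp_eq _ _ _ h1 h2).
  destruct (neck_cof N D1 D2 hN (proj2 t1) (proj2 t2)) as [z [z1 z2]].
  exists z; split; auto.
Qed.

Lemma part1 w : is_end F w -> exists d, is_direction F d /\ forall A, finite A -> isK F A w (d A).
Proof.
  intros hw.
  set (dw := fun (A : T -> Prop) (x : T) => exists C, isK F A w C /\ C x).
  assert (deq : forall A C, isK F A w C -> dw A = C).
  { intros A C hC. apply set_ext. intros x; split.
    - intros [C' [h' hx]]. rewrite (K_unique w A C C' hw hC h'); auto.
    - intros hx. exists C; auto. }
  exists dw. split.
  - split.
    + intros A hA. destruct (K_exists w A hw hA) as [C hC]. rewrite (deq A C hC). apply hC.
    + intros A B hA hB hAB.
      destruct (K_exists w A hw hA) as [CA hCA]. destruct (K_exists w B hw hB) as [CB hCB].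
      rewrite (deq A CA hCA), (deq B CB hCB).
      destruct (end_self w hw) as [N [hN hwN]].
      destruct hCA as [cA kA]. destruct hCB as [cB kB].
      destruct (kA N hwN) as [DA [tA sA]]. destruct (kB N hwN) as [DB [tB sB]].
      apply (comp_absorb (setminus (@setT T) A) CA CB cA).
      * apply cB.
      * intros x hx. destruct cB as [_ [s _]]. destruct (s x hx) as [_ h]. split. exact I. intros ha; apply h, hAB, ha.
      * destruct (neck_cof N DA DB hN (proj2 tA) (proj2 tB)) as [z [z1 z2]].
        exists z; split; auto.
  - intros A hA. destruct (K_exists w A hw hA) as [C hC]. rewrite (deq A C hC). auto.
Qed.

Lemma part3 w1 w2 d : is_end F w1 -> is_end F w2 ->
     (forall A, finite A -> isK F A w1 (d A)) ->
     (forall A, finite A -> isK F A w2 (d A)) ->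
     forall N, w1 N -> w2 N.
Proof.
  intros [N1 [hN1 hw1]] [N2 [hN2 hw2]] k1 k2 N hN.
  assert (hN2w : w2 N2) by (apply hw2; split; auto; apply neck_refl; auto).
  apply hw1 in hN as [hN he].
  apply hw2. split; auto.
  intros X hX. exists (d X). split. apply (k1 X hX).
  split. apply (k2 X hX). auto. apply (k1 X hX). apply hw1. auto.
Qed.

Section Dir.
Variable d : (T -> Prop) -> (T -> Prop).
Hypothesis hd : is_direction F d.

Definition emp : T -> Prop := fun _ => False.
Lemma fin_emp : finite emp. Proof. exists nil; intros x []. Qed.
Lemma d_comp A : finite A -> component F (setminus (@setT T) A) (d A).
Proof. intros hA. apply (proj1 hd A hA). Qed.
Lemma d_ne A : finite A -> exists x, d A x.
Proof. intros hA. apply (d_comp A hA). Qed.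
Lemma d_conn A : finite A -> connected F (d A).
Proof. intros hA. apply (d_comp A hA). Qed.
Lemma d_out A x : finite A -> d A x -> ~ A x.
Proof. intros hA hx. destruct (d_comp A hA) as [_ [s _]]. apply (s x hx). Qed.
Lemma d_mono A B : finite A -> finite B -> subset A B -> subset (d B) (d A).
Proof. apply (proj2 hd). Qed.
Lemma d_absorb A C : finite A -> connected F C -> (forall x, C x -> ~ A x) -> (exists z, C z /\ d A z) -> subset C (d A).
Proof.
  intros hA hC hCA hz. apply (comp_absorb _ _ _ (d_comp A hA) hC); auto.
  intros x hx. split. exact I. auto.
Qed.

Lemma inhT : inhabited T.
Proof. destruct (d_ne emp fin_emp) as [x _]. exact (inhabits x). Qed.
Lemma inhS : inhabited (T -> Prop).
Proof. exact (inhabits emp). Qed.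

Definition pt (B : T -> Prop) : T := @epsilon _ inhT (fun x => d B x).
Lemma pt_spec B : finite B -> d B (pt B).
Proof. intros hB. apply (epsilon_spec inhT (fun x => d B x)). apply d_ne; auto. Qed.

Definition Hspec B x y (E H : T -> Prop) :=
  F H /\ subset H (d B) /\ H x /\ H y /\ (forall z, E z -> d B z -> H z).
Definition mkH B x y E := @epsilon _ inhS (Hspec B x y E).
Lemma mkH_spec B x y E : finite B -> d B x -> d B y -> finite E -> Hspec B x y E (mkH B x y E).
Proof.
  intros hB hx hy [l hl]. apply (epsilon_spec inhS (Hspec B x y E)).
  destruct (conn_list (d B) (d_conn B hB) (x :: y :: l)) as [H [fH [sH iH]]].
  exists H. repeat split; auto.
  - apply iH; auto. left; auto.
  - apply iH; auto. right; left; auto.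
  - intros z hz hdz. apply iH; auto. right; right; auto.
Qed.

Section Constr.
Variable g : nat -> (T -> Prop) -> (T -> Prop).
Hypothesis hg : forall k B, finite B -> finite (g k B).

Fixpoint state (k : nat) : (T -> Prop) * T * (T -> Prop) :=
  match k with
  | 0 => (emp, pt emp, emp)
  | S k => let s := state k in
           let B := fst (fst s) in let x := snd (fst s) in let Hp := snd s in
           let B' := setU (setU B Hp) (g k B) in
           let x' := pt B' in (B', x', mkH B x x' (g k B))
  end.
Definition Bs k := fst (fst (state k)).
Definition xs k := snd (fst (state k)).
Definition Hp k := snd (state k).
Definition Hs k := Hp (S k).
Lemma Bs_S k : Bs (S k) = setU (setU (Bs k) (Hp k)) (g k (Bs k)).
Proof. reflexivity. Qed.
Lemma xs_S k : xs (S k) = pt (Bs (S k)).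
Proof. reflexivity. Qed.
Lemma Hp_S k : Hp (S k) = mkH (Bs k) (xs k) (xs (S k)) (g k (Bs k)).
Proof. reflexivity. Qed.

Lemma inv k : finite (Bs k) /\ d (Bs k) (xs k) /\ finite (Hp k).
Proof.
  induction k as [|k [fB [dx fH]]].
  - split. apply fin_emp. split. apply pt_spec, fin_emp. apply fin_emp.
  - assert (fB' : finite (Bs (S k))).
    { rewrite Bs_S. apply finite_union; auto. apply finite_union; auto. }
    assert (dx' : d (Bs (S k)) (xs (S k))).
    { rewrite xs_S. apply pt_spec; auto. }
    split; auto. split; auto.
    rewrite Hp_S.
    destruct (mkH_spec (Bs k) (xs k) (xs (S k)) (g k (Bs k))) as [f _]; auto.
    apply (d_mono (Bs k) (Bs (S k))); auto. rewrite Bs_S. intros z hz; left; left; auto.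
    apply F_fin; auto.
Qed.

Lemma Hs_spec k : Hspec (Bs k) (xs k) (xs (S k)) (g k (Bs k)) (Hs k).
Proof.
  unfold Hs. rewrite Hp_S. destruct (inv k) as [fB [dx _]]. destruct (inv (S k)) as [fB' [dx' _]].
  apply mkH_spec; auto.
  apply (d_mono (Bs k) (Bs (S k))); auto. rewrite Bs_S. intros z hz; left; left; auto.
Qed.

Lemma Bs_mono m n : m <= n -> subset (Bs m) (Bs n).
Proof.
  induction 1. intros x hx; auto.
  intros x hx. rewrite Bs_S. left; left; auto.
Qed.

Lemma g_in_B k : subset (g k (Bs k)) (Bs (S k)).
Proof. intros x hx. rewrite Bs_S. right; auto. Qed.

Lemma Hs_in_B k : subset (Hs k) (Bs (S (S k))).
Proof. intros x hx. rewrite Bs_S. left; right; auto. Qed.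

Lemma Hs_far i j x : S (S i) <= j -> Hs i x -> Hs j x -> False.
Proof.
  intros hij h1 h2. destruct (Hs_spec j) as [_ [s _]].
  apply (d_out (Bs j) x (proj1 (inv j)) (s x h2)).
  apply (Bs_mono (S (S i)) j hij). apply Hs_in_B; auto.
Qed.

Lemma Hs_inter i j : (exists x, Hs i x /\ Hs j x) <-> (i <= j + 1 /\ j <= i + 1).
Proof.
  split.
  - intros [x [h1 h2]]. split.
    + destruct (le_lt_dec i (j+1)) as [h|h]; auto. exfalso. apply (Hs_far j i x); auto; lia.
    + destruct (le_lt_dec j (i+1)) as [h|h]; auto. exfalso. apply (Hs_far i j x); auto; lia.
  - intros [h1 h2].
    assert (c : i = j \/ j = S i \/ i = S j) by lia.
    destruct c as [ <- | [ -> | -> ] ].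
    + exists (xs i). destruct (Hs_spec i) as [_ [_ [a _]]]. auto.
    + exists (xs (S i)). destruct (Hs_spec i) as [_ [_ [_ [a _]]]]. destruct (Hs_spec (S i)) as [_ [_ [b _]]]. auto.
    + exists (xs (S j)). destruct (Hs_spec j) as [_ [_ [_ [a _]]]]. destruct (Hs_spec (S j)) as [_ [_ [b _]]]. auto.
Qed.

End Constr.

Lemma end_from_seq (H : nat -> T -> Prop) : (forall n, F (H n)) ->
  (forall i j, (exists x, H i x /\ H j x) <-> (i <= j + 1 /\ j <= i + 1)) ->
  (forall X, finite X -> exists k0, forall k, k0 <= k -> exists w, H k w /\ d X w) ->
  exists w, is_end F w /\ forall A, finite A -> isK F A w (d A).
Proof.
  intros hH hij hc.
  set (N := fun x => exists n, H n x).
  assert (hNeck : necklace F N).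
  { split.
    - assert (e : N = (fun x => exists n, 0 <= n /\ H n x)).
      { apply set_ext. intros x; split. intros [n hn]; exists n; split; auto; lia. intros [n [_ hn]]; exists n; auto. }
      rewrite e. apply chain_conn. intros n; apply conn_F; auto. intros n; apply (hij n (S n)); lia.
    - exists H. split. intros n; split. apply F_fin; auto. apply conn_F; auto.
      split. intros x; split; auto. auto. }
  exists (fun M => necklace F M /\ neck_equiv F N M).
  split.
  - exists N. split; auto. intros M; split; auto.
  - intros A hA. split. apply d_comp; auto.
    intros M [hM he].
    destruct (he A hA) as [C [hC [[DN [hDN hDNC]] [DM [hDM hDMC]]]]].
    exists DM; split; auto.
    destruct hDN as [[hne [hs [hcon _]]] hfin].
    assert (sub : subset DN (d A)).
    { apply d_absorb; auto.
      - intros x hx. apply (hs x hx).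
      - destruct (finhit H (fun i j h => proj1 (proj1 (hij i j) h)) _ hfin) as [n1 hn1].
        destruct (hc A hA) as [k0 hk0].
        destruct (hk0 (Nat.max n1 k0)) as [w [hw1 hw2]]. lia.
        exists w. split; auto. apply NNPP; intros hn.
        apply (hn1 (Nat.max n1 k0) w); auto. lia. split; auto. exists (Nat.max n1 k0); auto. }
    destruct hne as [z hz].
    assert (e : C = d A).
    { apply (comp_eq _ _ _ hC (d_comp A hA)). exists z. split; auto. }
    rewrite <- e; auto.
Qed.

Definition dominating (W : T -> Prop) :=
  forall X, finite X -> (forall x, X x -> ~ W x) -> exists w, W w /\ d X w.

Lemma caseA : (forall Z, finite Z -> exists W, finite W /\ dominating W /\ forall x, W x -> ~ Z x) ->
  exists w, is_end F w /\ forall A, finite A -> isK F A w (d A).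
Proof.
  intros hA.
  set (gA := fun (k : nat) (B : T -> Prop) =>
        @epsilon _ inhS (fun W => finite W /\ dominating W /\ forall x, W x -> ~ B x)).
  assert (gspec : forall k B, finite B -> finite (gA k B) /\ dominating (gA k B) /\ forall x, gA k B x -> ~ B x).
  { intros k B hB. apply (epsilon_spec inhS (fun W => finite W /\ dominating W /\ forall x, W x -> ~ B x)). apply hA; auto. }
  assert (hg : forall k B, finite B -> finite (gA k B)) by (intros; apply gspec; auto).
  apply (end_from_seq (Hs gA)).
  - intros n. apply (Hs_spec gA hg n).
  - apply (Hs_inter gA hg).
  - intros X [l hl].
    assert (hmo : forall n m x, n <= m -> (forall k, n <= k -> ~ gA k (Bs gA k) x) -> (forall k, m <= k -> ~ gA k (Bs gA k) x)).
    { intros n m x hnm h k hk. apply h; lia. }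
    destruct (list_bound _ hmo l) as [N hN].
    { intros x _. destruct (classic (exists k0, gA k0 (Bs gA k0) x)) as [[k0 hk0]|hn].
      - exists (S k0). intros k hk hx.
        destruct (gspec k (Bs gA k) (proj1 (inv gA hg k))) as [_ [_ dis]].
        apply (dis x hx). apply (Bs_mono gA (S k0) k hk). apply g_in_B; auto.
      - exists 0. intros k _ hx. apply hn; exists k; auto. }
    exists N. intros k hk.
    destruct (inv gA hg k) as [fB _].
    destruct (gspec k (Bs gA k) fB) as [fW [dW dis]].
    assert (fX : finite X) by (exists l; auto).
    destruct (dW (setU X (Bs gA k))) as [w [hw1 hw2]].
    + apply finite_union; auto.
    + intros x [hx|hx] hW. apply (hN x (hl x hx) k hk hW). apply (dis x hW hx).
    + exists w. split.
      * destruct (Hs_spec gA hg k) as [_ [_ [_ [_ h5]]]]. apply h5; auto.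
        apply (d_mono (Bs gA k) (setU X (Bs gA k))); auto. apply finite_union; auto. intros z hz; right; auto.
      * apply (d_mono X (setU X (Bs gA k))); auto. apply finite_union; auto. intros z hz; left; auto.
Qed.

Lemma caseB Z : finite Z -> (forall W, finite W -> dominating W -> exists x, W x /\ Z x) ->
  exists w, is_end F w /\ forall A, finite A -> isK F A w (d A).
Proof.
  intros hZ hZW.
  set (P := fun (W X : T -> Prop) => finite X /\ (forall x, X x -> ~ (W x /\ ~ Z x)) /\ (forall x, W x -> ~ Z x -> ~ d X x)).
  set (Xsel := fun W => @epsilon _ inhS (P W)).
  assert (Xspec : forall W, finite W -> P W (Xsel W)).
  { intros W hW. apply (epsilon_spec inhS (P W)).
    set (W' := fun x => W x /\ ~ Z x).
    assert (fW' : finite W') by (apply finite_sub with W; auto; intros x [h _]; auto).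
    assert (nd : ~ dominating W').
    { intros hdom. destruct (hZW W' fW' hdom) as [x [[_ h1] h2]]. auto. }
    apply NNPP; intros hn. apply nd. intros X hX hdis. apply NNPP; intros hne.
    apply hn. exists X. split; auto. split.
    - intros x hx hw. apply (hdis x hx hw).
    - intros x hw hz hdx. apply hne. exists x. split; auto. split; auto. }
  set (x0 := pt Z).
  assert (hx0 : d Z x0) by (apply pt_spec; auto).
  set (Ws := fix Ws n := match n with 0 => (fun x => x = x0) | S n => setU (Ws n) (Xsel (Ws n)) end).
  assert (WsS : forall n, Ws (S n) = setU (Ws n) (Xsel (Ws n))) by reflexivity.
  assert (Wfin : forall n, finite (Ws n)).
  { induction n as [|n IH]. exists (x0 :: nil). intros x hx; left; auto.
    rewrite WsS. apply finite_union; auto. apply Xspec; auto. }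
  assert (Wmono : forall m n, m <= n -> subset (Ws m) (Ws n)).
  { induction 1. intros x hx; auto. intros x hx. rewrite WsS. left; auto. }
  set (A := fun n => setU Z (Ws n)).
  assert (Afin : forall n, finite (A n)) by (intros n; apply finite_union; auto).
  assert (Amono : forall m n, m <= n -> subset (A m) (A n)).
  { intros m n h x [hx|hx]. left; auto. right; apply (Wmono m n h); auto. }
  assert (cof : forall X, finite X -> exists n, subset (d (A n)) (d X)).
  { intros X hX. apply NNPP; intros hn.
    assert (h1 : forall n, exists x, X x /\ d (A n) x).
    { intros n. apply NNPP; intros h. apply hn; exists n.
      apply d_absorb; auto. apply d_conn; auto.
      intros x hx hXx. apply h; exists x; auto.
      destruct (d_ne (setU (A n) X)) as [z hz]. apply finite_union; auto.
      exists z. split.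
      apply (d_mono (A n) (setU (A n) X)); auto. apply finite_union; auto. intros y hy; left; auto.
      apply (d_mono X (setU (A n) X)); auto. apply finite_union; auto. intros y hy; right; auto. }
    assert (h2 : exists j, X j /\ forall n, d (A n) j).
    { apply NNPP; intros h. destruct hX as [l hl].
      assert (hmo : forall n m x, n <= m -> (X x -> ~ d (A n) x) -> (X x -> ~ d (A m) x)).
      { intros n m x hnm hh hx hd'. apply (hh hx). apply (d_mono (A n) (A m)); auto. }
      destruct (list_bound _ hmo l) as [N hN].
      { intros x _. destruct (classic (X x)) as [hx|hx].
        - apply NNPP; intros hne. apply h. exists x. split; auto. intros n. apply NNPP; intros hd'.
          apply hne. exists n. intros _; auto.
        - exists 0. intros hx'; contradiction. }
      destruct (h1 N) as [x [hx hdx]]. apply (hN x (hl x hx) hx hdx). }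
    destruct h2 as [j [hjX hj]].
    assert (hjZ : d Z j).
    { apply (d_mono Z (A 0)); auto. intros y hy; left; auto. }
    destruct (d_conn Z hZ x0 j hx0 hjZ) as [Q [fQ [sQ [qx0 qj]]]].
    destruct (F_fin Q fQ) as [lq hlq].
    assert (hmo : forall n m x, n <= m -> ((exists k, Ws k x) -> Ws n x) -> ((exists k, Ws k x) -> Ws m x)).
    { intros n m x hnm hh he. apply (Wmono n m hnm). auto. }
    destruct (list_bound _ hmo lq) as [N hN].
    { intros x _. destruct (classic (exists k, Ws k x)) as [[k hk]|hn'].
      - exists k. intros _; auto.
      - exists 0. intros he; contradiction. }
    destruct (Xspec (Ws N) (Wfin N)) as [fXN [disXN sepXN]].
    assert (hjXN : d (Xsel (Ws N)) j).
    { apply (d_mono (Xsel (Ws N)) (A (S N))); auto. intros y hy. right. rewrite WsS. right; auto. }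
    assert (QXN : subset Q (d (Xsel (Ws N)))).
    { apply d_absorb; auto. apply conn_F; auto.
      - intros x hx hxX. apply (disXN x hxX). split.
        + apply (hN x (hlq x hx)). exists (S N). rewrite WsS. right; auto.
        + apply (d_out Z x hZ (sQ x hx)).
      - exists j; auto. }
    apply (sepXN x0).
    - apply (Wmono 0 N); auto. lia. simpl. reflexivity.
    - apply (d_out Z x0 hZ hx0).
    - apply QXN; auto. }
  set (gB := fun (k : nat) (B : T -> Prop) => A k).
  assert (hg : forall k B, finite B -> finite (gB k B)) by (intros; apply Afin).
  apply (end_from_seq (Hs gB)).
  - intros n. apply (Hs_spec gB hg n).
  - apply (Hs_inter gB hg).
  - intros X hX. destruct (cof X hX) as [n hn]. exists (S n). intros k hk.
    exists (xs gB k). split.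
    + destruct (Hs_spec gB hg k) as [_ [_ [a _]]]. auto.
    + apply hn. apply (d_mono (A n) (Bs gB k)); auto. apply (inv gB hg k).
      intros y hy. apply (Bs_mono gB (S n) k hk). apply (g_in_B gB n). exact hy.
      apply (inv gB hg k).
Qed.

Lemma surj : exists w, is_end F w /\ forall A, finite A -> isK F A w (d A).
Proof.
  destruct (classic (forall Z, finite Z -> exists W, finite W /\ dominating W /\ forall x, W x -> ~ Z x)) as [hA|hnA].
  - apply caseA; auto.
  - apply not_all_ex_not in hnA as [Z hZ].
    apply imply_to_and in hZ as [hZ hn].
    apply (caseB Z hZ). intros W hW hdom. apply NNPP; intros hne.
    apply hn. exists W. split; auto. split; auto. intros x hx hz. apply hne; exists x; auto.
Qed.

End Dir.

End Basics.

Theorem theorem1p1 (T : Type) (F : (T -> Prop) -> Prop) (hF : is_connectoid F) :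
  (* existence of d_w *)
  (forall w, is_end F w ->
     exists d, is_direction F d /\ forall A, finite A -> isK F A w (d A)) /\
  (* uniqueness of d_w (as a map on finite sets) *)
  (forall w d d', is_end F w -> is_direction F d -> is_direction F d' ->
     (forall A, finite A -> isK F A w (d A)) ->
     (forall A, finite A -> isK F A w (d' A)) ->
     forall A, finite A -> forall x, d A x <-> d' A x) /\
  (* injectivity of w |-> d_w *)
  (forall w1 w2 d, is_end F w1 -> is_end F w2 -> is_direction F d ->
     (forall A, finite A -> isK F A w1 (d A)) ->
     (forall A, finite A -> isK F A w2 (d A)) ->
     forall N, w1 N <-> w2 N) /\
  (* surjectivity of w |-> d_w *)
  (forall d, is_direction F d ->
     exists w, is_end F w /\ forall A, finite A -> isK F A w (d A)).
Proof.
  split; [|split; [|split]].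
  - intros w hw. apply (part1 T F hF w hw).
  - intros w d d' hw _ _ h1 h2 A hA x.
    rewrite (K_unique T F hF w A (d A) (d' A) hw (h1 A hA) (h2 A hA)). tauto.
  - intros w1 w2 d hw1 hw2 _ h1 h2 N. split.
    + apply (part3 T F hF w1 w2 d); auto.
    + apply (part3 T F hF w2 w1 d); auto.
  - intros d hd. apply (surj T F hF d hd).
Qed.
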